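(* Let $\mathsf{T},\mathsf{U}$ be geometric theories over a set $\mathrm{At}$, and let $R = \{([\varphi]_{\mathsf T},[\psi]_{\mathsf T}) \mid (\varphi\vdash\psi)\in\mathsf T\cup\mathsf U\}$, a binary relation on the frame $\mathrm{Geom}(\mathrm{At})/\mathsf{T}$. Let $\overline{R}$ be the least congruence preorder on $\mathrm{Geom}(\mathrm{At})/\mathsf T$ containing $R$, and $\sim_{\overline R}$ the equivalence it induces. Then $\mathrm{Geom}(\mathrm{At})/(\mathsf T\cup\mathsf U)$ is isomorphic to the quotient of $\mathrm{Geom}(\mathrm{At})/\mathsf T$ by $\sim_{\overline R}$.
   Context: Geometric logic over $\mathrm{At}$: conjunctive formulae $\gamma::=p\mid\mathsf{true}\mid\gamma\wedge\gamma$; $\mathrm{Geom}(\mathrm{At})$ consists of $\bigvee S$ for sets $S$ of conjunctive formulae; $\bigvee_i\varphi_i$ collects all disjuncts; $\varphi\wedge\psi=\bigvee\{\gamma\wedge\gamma'\}$ over disjuncts. For a theory $\mathsf T$ (set of sequents $\varphi\vdash\psi$), $\vdash_{\mathsf T}$ is the least relation closed under: theory axioms; reflexivity; cut; $\varphi\wedge\psi\vdash\varphi$, $\varphi\wedge\psi\vdash\psi$; from $\theta\vdash\varphi$, $\theta\vdash\psi$ infer $\theta\vdash\varphi\wedge\psi$; $\varphi\vdash\mathsf{true}$; from $\varphi_i\vdash\psi$ for all $i$ infer $\bigvee_i\varphi_i\vdash\psi$; $\varphi_i\vdash\bigvee_i\varphi_i$. $\mathrm{Geom}(\mathrm{At})/\mathsf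 T$ is the quotient by mutual derivability, classes $[\varphi]_{\mathsf T}$, ordered by derivability; it is a frame. A congruence preorder on a frame $(L,\leq)$ is a preorder $\preceq$ on $L$ containing $\leq$ such that for every $S\subseteq L$, $\bigvee S\preceq b$ whenever $a\preceq b$ for all $a\in S$, and for every finite $S\subseteq L$, $b\preceq\bigwedge S$ whenever $b\preceq a$ for all $a\in S$. It induces $a\sim b$ iff $a\preceq b$ and $b\preceq a$; the quotient $L/{\sim}$ is ordered by the induced order. *)

(* Defs.v *)
From Stdlib Require Import List.
Import ListNotations.

Set Implicit Arguments.

Section Geom.
Variable At : Type.

Inductive conjf : Type :=
| CAtom : At -> conjf
| CTrue : conjf
| CAnd  : conjf -> conjf -> conjf.

(* Geom(At): a geometric formula  \/ S  is given by its set S of disjuncts *)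
Definition geom : Type := conjf -> Prop.

Definition gconj (g : conjf) : geom := fun g' => g' = g.
Definition gtrue : geom := gconj CTrue.

Definition gor (F : geom -> Prop) : geom :=
  fun g => exists phi, F phi /\ phi g.

Definition gand (phi psi : geom) : geom :=
  fun g => exists g1 g2, phi g1 /\ psi g2 /\ g = CAnd g1 g2.

Definition gmeet (l : list geom) : geom := fold_right gand gtrue l.

Definition theory : Type := geom -> geom -> Prop.

Definition theory_union (T U : theory) : theory := fun phi psi => T phi psi \/ U phi psi.

Inductive derives (T : theory) : geom -> geom -> Prop :=
| der_ax : forall phi psi, T phi psi -> derives T phi psi
| der_refl : forall phi, derives T phi phi
| der_cut : forall phi chi psi, derives T phi chi -> derives T chi psi -> derives T phi psi
| der_andl : forall phi psi, derives T (gand phi psi) phi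
| der_andr : forall phi psi, derives T (gand phi psi) psi
| der_andI : forall th phi psi, derives T th phi -> derives T th psi -> derives T th (gand phi psi)
| der_true : forall phi, derives T phi gtrue
| der_orE : forall (F : geom -> Prop) psi,
    (forall phi, F phi -> derives T phi psi) -> derives T (gor F) psi
| der_orI : forall (F : geom -> Prop) phi, F phi -> derives T phi (gor F).

(* Geom(At)/T is represented by the carrier geom with the preorder |-_T;
   its elements are the classes [phi]_T, [phi]_T <= [psi]_T iff phi |-_T psi.
   Joins: [gor F]; finite meets: [gmeet l].  A relation on Geom(At)/T is
   represented by a relation on representatives, invariant under T-equivalence. *)
Definition teq (T : theory) (phi psi : geom) : Prop := derives T phi psi /\ derives T psi phi.

Definition congruence_preorder (T : theory) (P : geom -> geom -> Prop) : Prop :=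
  (forall a a' b b', teq T a a' -> teq T b b' -> P a b -> P a' b') /\
  (forall a, P a a) /\
  (forall a b c, P a b -> P b c -> P a c) /\
  (forall a b, derives T a b -> P a b) /\
  (forall (S : geom -> Prop) b, (forall a, S a -> P a b) -> P (gor S) b) /\
  (forall (S : list geom) b, (forall a, In a S -> P b a) -> P b (gmeet S)).

Definition Rrel (T U : theory) (a b : geom) : Prop :=
  exists phi psi, theory_union T U phi psi /\ teq T a phi /\ teq T b psi.

Definition Rbar (T U : theory) (a b : geom) : Prop :=
  forall P, congruence_preorder T P -> (forall x y, Rrel T U x y -> P x y) -> P a b.

(* An order isomorphism between two posets presented as preorders on carriers
   (i.e. between their posetal quotients): f is well-defined, order preserving
   and reflecting, and surjective on classes. *)
Definition order_iso {A B : Type} (leA : A -> A -> Prop) (leB : B -> B -> Prop)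
    (f : A -> B) : Prop :=
  (forall a a', leA a a' <-> leB (f a) (f a')) /\
  (forall b, exists a, leB (f a) b /\ leB b (f a)).

End Geom.

Arguments gtrue {At}.

(* Main.v *)
Require Import Defs.
From Stdlib Require Import List.
Import ListNotations.

Lemma der_mono (At : Type) (T U : theory At) a b :
  derives T a b -> derives (theory_union T U) a b.
Proof.
  induction 1.
  - apply der_ax; left; assumption.
  - apply der_refl.
  - eapply der_cut; eauto.
  - apply der_andl.
  - apply der_andr.
  - apply der_andI; auto.
  - apply der_true.
  - apply der_orE; auto.
  - apply der_orI; auto.
Qed.

Lemma Q_cong (At : Type) (T U : theory At) :
  congruence_preorder T (derives (theory_union T U)).
Proof.
  repeat split.
  - intros a a' b b' [_ H1] [H2 _] H.
    eapply der_cut; [apply (@der_mono _ T U _ _ H1)|].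
    eapply der_cut; [exact H|apply (@der_mono _ T U _ _ H2)].
  - intros; apply der_refl.
  - intros; eapply der_cut; eauto.
  - intros; apply der_mono; auto.
  - intros; apply der_orE; auto.
  - intros S b H. induction S as [|x S IH]; simpl.
    + apply der_true.
    + apply der_andI; [apply H; left; reflexivity|apply IH; intros; apply H; right; auto].
Qed.

Lemma Rbar_der (At : Type) (T U : theory At) a b :
  derives (theory_union T U) a b -> Rbar T U a b.
Proof.
  induction 1; intros P HP HR;
  pose proof HP as (Hw & Hr & Ht & Hd & Hj & Hm).
  - apply HR. exists phi, psi; repeat split; auto; apply der_refl.
  - apply Hr.
  - eapply Ht; [apply (IHderives1 P HP HR)|apply (IHderives2 P HP HR)].
  - apply Hd, der_andl.
  - apply Hd, der_andr.
  - assert (Hg : P th (gmeet [phi; psi])).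
    { apply Hm. intros x [<-|[<-|[]]].
      - apply IHderives1; auto.
      - apply IHderives2; auto. }
    eapply Ht; [exact Hg|]. apply Hd. simpl.
    apply der_andI; [apply der_andl|].
    eapply der_cut; [apply der_andr|apply der_andl].
  - apply Hd, der_true.
  - apply Hj. intros a Ha. apply H0; auto; auto.
  - apply Hd, der_orI; auto.
Qed.

Theorem mainTheorem14 (At : Type) (T U : theory At) :
  exists f : geom At -> geom At,
    order_iso (derives (theory_union T U)) (Rbar T U) f.
Proof.
  exists (fun x => x). split.
  - intros a a'. split.
    + apply Rbar_der.
    + intros H. apply H; [apply Q_cong|].
      intros x y (phi & psi & Hu & [H1 _] & [_ H2]).
      eapply der_cut; [apply (@der_mono _ T U _ _ H1)|].
      eapply der_cut; [apply der_ax; exact Hu|apply (@der_mono _ T U _ _ H2)].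
  - intros b. exists b. split; apply Rbar_der, der_refl.
Qed.
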